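(* Let $\Delta$ be an even natural number, and for $j=1,2,\dots$ let $G_j$ be a graph on $n_j$ vertices with $n_j\to\infty$, of maximum degree $\Delta$, such that the number $z_j$ of vertices of $G_j$ of degree smaller than $\Delta$ satisfies $z_j=o(n_j)$. Then $\limsup_{j\to\infty}\alpha_{\mathrm{od}}(G_j)/n_j\le\frac{\Delta-1}{2\Delta-1}$.
   Context: An odd independent set in $G=(V,E)$ is an independent set $S$ such that every $v\in V\setminus S$ has either no neighbor or an odd number of neighbors in $S$; $\alpha_{\mathrm{od}}(G)$ is its maximum size. *)

(* Defs.v *)
From HB Require Import structures.
From mathcomp Require Import all_boot all_order all_algebra.
From mathcomp Require Import all_classical all_reals all_analysis.
Set Implicit Arguments. Unset Strict Implicit. Unset Printing Implicit Defensive.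

Definition simple_graph (T : finType) (e : rel T) : Prop :=
  symmetric e /\ irreflexive e.

Definition nbhd (T : finType) (e : rel T) (v : T) : {set T} := [set u | e v u].
Definition deg (T : finType) (e : rel T) (v : T) : nat := #|nbhd e v|.

Definition independent (T : finType) (e : rel T) (S : {set T}) : bool :=
  [forall u in S, forall v in S, ~~ e u v].

Definition odd_independent (T : finType) (e : rel T) (S : {set T}) : bool :=
  independent e S &&
  [forall v in ~: S, (#|nbhd e v :&: S| == 0%N) || odd #|nbhd e v :&: S|].

Definition alpha_od (T : finType) (e : rel T) : nat :=
  \max_(S : {set T} | odd_independent e S) #|S|.

Definition max_degree_eq (T : finType) (e : rel T) (D : nat) : Prop :=
  (forall v, deg e v <= D)%N /\ exists v, deg e v = D.

Definition n_low (T : finType) (e : rel T) (D : nat) : nat :=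
  #|[set v | (deg e v < D)%N]|.

(* Main.v *)
Require Import Defs.
From HB Require Import structures.
From mathcomp Require Import all_boot all_order all_algebra.
From mathcomp Require Import all_classical all_reals all_analysis.
From mathcomp Require Import ring lra.
Import Order.TTheory GRing.Theory Num.Theory.
Import numFieldNormedType.Exports.
Local Open Scope classical_set_scope.
Local Open Scope ring_scope.
From mathcomp Require Import zify.
Section Comb.
Local Open Scope nat_scope.
Variables (T : finType) (e : rel T) (D : nat).
Hypothesis (He : simple_graph e) (HD : ~~ odd D) (Hmax : forall v, (deg e v <= D)%N).

Lemma card_nbhdI (v : T) (S : {set T}) : #|nbhd e v :&: S| = \sum_(u in S) (e v u : nat).
Proof.
rewrite -sum1_card big_mkcond [RHS]big_mkcond /=; apply: eq_bigr => u _.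
by rewrite !inE andbC; case: (u \in S); case: (e v u).
Qed.

Lemma deg_sum v : deg e v = \sum_u (e v u : nat).
Proof.
rewrite /deg -sum1_card big_mkcond /=; apply: eq_bigr => u _.
by rewrite !inE; case: (e v u).
Qed.

Lemma key (S : {set T}) : odd_independent e S ->
  (D * #|S| <= (D - 1) * #|~: S| + D * n_low e D)%N.
Proof.
case/andP=> /forallP Hind /forallP Hodd.
have [Hsym _] := He.
have H1 : (D * #|S| <= \sum_(v in S) deg e v + D * n_low e D)%N.
  have -> : n_low e D = \sum_(v : T) (deg e v < D : nat).
    by rewrite /n_low -sum1_card big_mkcond /=; apply: eq_bigr => v _; rewrite inE; case: (_ < _)%N.
  rewrite -sum1_card big_distrr /= muln1.
  have Hsub : (\sum_(v in S) (deg e v < D : nat) <= \sum_v (deg e v < D : nat))%N.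
    by rewrite [X in (_ <= X)%N](bigID (mem S)) /= leq_addr.
  apply: (leq_trans _ (leq_add (leqnn _) (leq_mul (leqnn D) Hsub))).
  rewrite big_distrr -big_split /=; apply: leq_sum => v _.
  by case: ltnP => H; rewrite ?muln1 ?muln0 ?addn0 // leq_addl.
have H2 : \sum_(v in S) deg e v = \sum_(u in ~: S) #|nbhd e u :&: S|.
  transitivity (\sum_(v in S) \sum_(u in ~: S) (e v u : nat)).
    apply: eq_bigr => v vS; rewrite deg_sum (bigID (mem S)) /= big1 ?add0n.
      by apply: eq_bigl => u; rewrite inE.
    move=> u uS; have := Hind v; rewrite vS /= => /forallP /(_ u); rewrite uS /=.
    by move/negbTE => ->.
  rewrite exchange_big /=; apply: eq_bigr => u _; rewrite card_nbhdI.
  by apply: eq_bigr => v _; rewrite Hsym.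
have H3 : (\sum_(u in ~: S) #|nbhd e u :&: S| <= (D - 1) * #|~: S|)%N.
  rewrite -sum1_card big_distrr /= muln1; apply: leq_sum => u uS.
  have := Hodd u; rewrite uS /= => /orP [/eqP -> //|Ho].
  have Hle : (#|nbhd e u :&: S| <= D)%N.
    by apply: leq_trans (Hmax u); apply: subset_leq_card; apply: subsetIl.
  rewrite leq_eqVlt in Hle; case/orP: Hle => [/eqP Heq|Hlt]; first by move: HD; rewrite -Heq Ho.
  lia.
rewrite -H2 in H3; lia.
Qed.
End Comb.
Lemma real_abs (R : realType) (d A N Z : R) : 0 <= d -> 0 < N ->
  (d + 1) * A + d * A <= d * N + (d + 1) * Z ->
  A / N <= (d + 1 - 1) / (2 * (d + 1) - 1) + (d + 1) / (2 * (d + 1) - 1) * (Z / N).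
Proof.
move=> d0 N0 H.
have Hd : 0 < 2 * (d + 1) - 1 by lra.
rewrite -subr_ge0.
have -> : (d + 1 - 1) / (2 * (d + 1) - 1) + (d + 1) / (2 * (d + 1) - 1) * (Z / N) - A / N
  = (d * N + (d + 1) * Z - ((d + 1) * A + d * A)) / ((2 * (d + 1) - 1) * N).
  by field; rewrite !gt_eqF.
apply: divr_ge0; first lra.
by apply: mulr_ge0; lra.
Qed.

Lemma real_step (R : realType) (d a n z : nat) :
  (d.+1 * a + d * a <= d * n + d.+1 * z)%N ->
  (a%:R / n%:R : R) <= (d.+1%:R - 1) / (2 * d.+1%:R - 1) + d.+1%:R / (2 * d.+1%:R - 1) * (z%:R / n%:R).
Proof.
move=> H.
have HR : (d.+1%:R * a%:R + d%:R * a%:R <= d%:R * n%:R + d.+1%:R * z%:R :> R).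
  by rewrite -!natrM -!natrD ler_nat.
rewrite -[d.+1]addn1 natrD in HR *.
case: n H HR => [|n] H HR.
  rewrite !invr0 !mulr0 addr0 //; apply: divr_ge0; have := ler0n R d; lra.
by apply: real_abs => //; rewrite ltr0n.
Qed.

Lemma alpha_le_n (T : finType) (e : rel T) : (alpha_od e <= #|T|)%N.
Proof. by apply/bigmax_leqP => S _; apply: max_card. Qed.

Lemma alpha_key (T : finType) (e : rel T) (d : nat) :
  simple_graph e -> ~~ odd d.+1 -> (forall v, (deg e v <= d.+1)%N) ->
  (d.+1 * alpha_od e + d * alpha_od e <= d * #|T| + d.+1 * n_low e d.+1)%N.
Proof.
move=> He HD Hmax.
have set0_oi : odd_independent e finset.set0.
  apply/andP; split; first by apply/forallP => u; rewrite inE.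
  by apply/forallP => v; apply/implyP => _; rewrite finset.setI0 cards0.
have Hpos : (0 < #|(fun S : {set T} => odd_independent e S)|)%N.
  by apply/card_gt0P; exists finset.set0.
have [S HS Heq] := @eq_bigmax_cond _ (fun S => odd_independent e S) (fun S => #|S|) Hpos.
rewrite (_ : alpha_od e = #|S|); last by rewrite /alpha_od -Heq; apply: eq_bigl.
have := @key T e d.+1 He HD Hmax S HS.
have := cardsC S.
have := max_card (mem S).
nia.
Qed.

Theorem proposition4 (R : realType) (D : nat) (n : nat -> nat)
    (e : forall j, rel 'I_(n j)) :
  ~~ odd D ->
  (forall j, simple_graph (e j)) ->
  (forall M : nat, \forall j \near \oo, (M <= n j)%N) ->
  (forall j, max_degree_eq (e j) D) ->
  (fun j => (n_low (e j) D)%:R / (n j)%:R : R) @ \oo --> 0 ->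
  (limn_esup (fun j => ((alpha_od (e j))%:R / (n j)%:R : R)%:E)
     <= ((D%:R - 1) / (2 * D%:R - 1) : R)%:E)%E.
Proof.
move=> HD Hs _ Hmaxd Hz.
have Hj : forall j, ((alpha_od (e j))%:R / (n j)%:R : R) <=
   (D%:R - 1) / (2 * D%:R - 1) + D%:R / (2 * D%:R - 1) * ((n_low (e j) D)%:R / (n j)%:R).
  move=> j; have [Hm _] := Hmaxd j; clear Hz; move: HD Hm; case: D Hmaxd => [|d] _ HD Hm.
    rewrite mul0r mul0r addr0 mulr0 sub0r divrr ?unitrN ?unitr1 //.
    have := @alpha_le_n _ (e j); rewrite card_ord.
    move: (alpha_od (e j)) => a; case: (n j) => [|m] Ha; first by rewrite invr0 mulr0 ler01.
    by rewrite ler_pdivrMr ?ltr0n // mul1r ler_nat.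
  apply: real_step.
  by have := @alpha_key _ (e j) d (Hs j) HD Hm; rewrite card_ord.
set c := ((D%:R - 1) / (2 * D%:R - 1) : R) in Hj *.
set K := (D%:R / (2 * D%:R - 1) : R) in Hj.
set r := (fun j => (n_low (e j) D)%:R / (n j)%:R : R) in Hz Hj.
have Hv : (fun j => (c + K * r j)%:E) @ \oo --> c%:E.
  apply: cvg_EFin; first by apply: nearW.
  have : (fun j => c + K * r j) @ \oo --> c + K * 0.
    by apply: cvgD; [exact: cvg_cst | exact: cvgM (cvg_cst K) Hz].
  by rewrite mulr0 addr0.
rewrite limn_esup_lim.
have Hc := cvg_esups Hv.
rewrite -(cvg_lim _ Hc) //.
apply: lee_lim; [exact: is_cvg_esups | exact: is_cvg_esups | ].
apply: nearW => m /=.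
apply: ge_ereal_sup => x [k /= km <-].
apply: (@le_trans _ _ (c + K * r k)%:E); first by rewrite lee_fin; exact: Hj.
by apply: ereal_sup_ubound; exists k.
Qed.
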